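(* Let $(G_k,y)$ be a mass-action system with exactly one terminal strong component ($t=1$), considered as a single (independent) subnetwork, and assume $\ker(YR_k)\cap\mathbb{R}^{V_s}_{>0}\neq\emptyset$. Then (1) $K=L=S$, and (2) $d=\delta+t'-1$.
   Context: A reaction network $(G,y)$: finite simple digraph $G=(V,E)$ and map $y:V\to\mathbb{R}^n$; rate constants $k\in\mathbb{R}^E_{>0}$. $V_s$: source vertices (with an outgoing edge). $Y\in\mathbb{R}^{n\times V}$ has columns $y(i)$. The rectangular Laplacian $R_k\in\mathbb{R}^{V\times V_s}$ has $(R_k)_{i,j}=k_{j\to i}$ if $(j\to i)\in E$, $(R_k)_{j,j}=-\sum_{(j\to i')\in E}k_{j\to i'}$, $0$ otherwise. $S=\operatorname{span}\{y(i')-y(i):(i\to i')\in E\}$, $K=\operatorname{im}(YR_k)$, $L=\operatorname{span}\{y(i)-y(i'):i,i'\in V_s\}$. A terminal strong component is a strongly connected component with no edge leaving it; $t$ is their number and $t'$ the number of those with at least two vertices. $l$ is the number of weakly connected components; deficiency $\delta=|V|-l-\dim S$; dependency $d=|V_s|-1-\dim L$. *)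

(* Defs.v *)
From HB Require Import structures.
From mathcomp Require Import all_boot all_order all_algebra.
Set Implicit Arguments. Unset Strict Implicit. Unset Printing Implicit Defensive.
Import Order.TTheory GRing.Theory Num.Theory.
Local Open Scope ring_scope.

(* A reaction network: vertex set V (finType), edge relation E : rel V
   (simple digraph: irreflexive, at most one edge i -> i'), complex map
   y : V -> 'rV[R]_n, rate constants k : V -> V -> R (k i i' is the rate of
   the edge i -> i', only used on edges). *)

Section RN.
Variables (R : fieldType) (V : finType) (n : nat).
Variables (E : rel V) (y : V -> 'rV[R]_n) (k : V -> V -> R).

Definition Vs : {set V} := [set i | [exists j, E i j]].

(* rectangular Laplacian entry (R_k)_{i,j}, i in V, j in V_s *)
Definition Rk (i j : V) : R :=
  if E j i then k j i
  else if i == j then - \sum_(i' | E j i') k j i' else 0.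

Definition YRk_col (j : V) : 'rV[R]_n := \sum_(i : V) Rk i j *: y i.

Definition Sspace : {vspace 'rV[R]_n} :=
  <<[seq y p.2 - y p.1 | p <- enum [pred p : V * V | E p.1 p.2]]>>%VS.

Definition Kspace : {vspace 'rV[R]_n} :=
  <<[seq YRk_col j | j <- enum Vs]>>%VS.

Definition Lspace : {vspace 'rV[R]_n} :=
  <<[seq y p.1 - y p.2 | p <- enum [pred p : V * V | (p.1 \in Vs) && (p.2 \in Vs)]]>>%VS.

Definition symE : rel V := fun i j => E i j || E j i.
Definition nlink : nat := n_comp symE predT.

Definition scc (x : V) : {set V} := [set z | connect E x z && connect E z x].
Definition terminal (C : {set V}) : bool :=
  [forall z in C, forall w, E z w ==> (w \in C)].
Definition tscs : {set {set V}} := [set scc x | x in [pred x | terminal (scc x)]].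
Definition tnum : nat := #|tscs|.
Definition tnum' : nat := #|[set C in tscs | (1 < #|C|)%N]|.

Definition deficiency : int := (#|V|%:Z - (nlink)%:Z - (\dim Sspace)%:Z)%R.
Definition dependency : int := (#|Vs|%:Z - 1 - (\dim Lspace)%:Z)%R.

End RN.

(* Main.v *)
Require Import Defs.
From HB Require Import structures.
From mathcomp Require Import all_boot all_order all_algebra.
From mathcomp Require Import zify.
Set Implicit Arguments. Unset Strict Implicit. Unset Printing Implicit Defensive.
Import Order.TTheory GRing.Theory Num.Theory.
Local Open Scope ring_scope.


Section Graph.
Variables (V : finType) (E : rel V).

Lemma inVs j : (j \in Vs E) = [exists i, E j i].
Proof. by rewrite /Vs inE. Qed.

Lemma no_out b : b \notin Vs E -> forall z, connect E b z -> z = b.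
Proof.
rewrite inVs => /existsPn nb z /connectP [[|c p] /= Hp ->] //.
by move: Hp => /andP[]; rewrite (negbTE (nb c)).
Qed.

Lemma scc_self x : x \in scc E x.
Proof. by rewrite /scc inE connect0. Qed.

Lemma root_exists : tnum E = 1%N ->
  exists x0, (forall x, connect E x x0) /\ tscs E = [set scc E x0]
             /\ terminal E (scc E x0).
Proof.
move=> /eqP/cards1P [C0 HC0].
have : C0 \in tscs E by rewrite HC0 set11.
case/imsetP => x0; rewrite inE => Hterm HC; subst C0.
exists x0; split; last by split.
move=> x.
pose reach z := #|[set w | connect E z w]|.
have [z Hxz Hmin] := arg_minnP reach (connect0 E x).
have Hz : terminal E (scc E z).
  apply/forallP => w; apply/implyP => Hw; apply/forallP => w'; apply/implyP => Eww'.
  move: Hw; rewrite /scc !inE => /andP [Hzw Hwz].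
  have Hzw' : connect E z w' by apply: connect_trans Hzw (connect1 Eww').
  rewrite Hzw' /=.
  have Hsub : [set v | connect E w' v] \subset [set v | connect E z v].
    by apply/subsetP => v; rewrite !inE; apply: connect_trans.
  have Hle := Hmin w' (connect_trans Hxz Hzw').
  have Heq : [set v | connect E w' v] = [set v | connect E z v].
    by apply/eqP; rewrite eqEcard Hsub.
  have : z \in [set v | connect E z v] by rewrite inE connect0.
  by rewrite -Heq inE.
have : scc E z \in tscs E by apply/imsetP; exists z; rewrite ?inE.
rewrite HC0 inE => /eqP Hzz.
have : x0 \in scc E z by rewrite Hzz scc_self.
rewrite /scc inE => /andP [Hzx0 _].
exact: connect_trans Hxz Hzx0.
Qed.

Lemma scc_nonsrc b : b \notin Vs E -> scc E b = [set b].
Proof.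
move=> Hb; apply/setP => z; rewrite /scc !inE.
apply/idP/idP => [/andP [Hbz _] | /eqP ->]; last by rewrite connect0.
by rewrite (no_out Hb Hbz).
Qed.

Lemma term_nonsrc b : b \notin Vs E -> terminal E (scc E b).
Proof.
move=> Hb; rewrite scc_nonsrc //; apply/forallP => z; apply/implyP.
rewrite inE => /eqP ->; apply/forallP => w; apply/implyP => Ebw.
by move: Hb; rewrite inVs => /existsPn /(_ w); rewrite Ebw.
Qed.

Lemma nonsrc_tscs C0 b : tscs E = [set C0] -> b \notin Vs E -> C0 = [set b].
Proof.
move=> HC Hb; have : scc E b \in tscs E.
  by apply/imsetP; exists b; rewrite // inE term_nonsrc.
by rewrite HC inE => /eqP <-; rewrite scc_nonsrc.
Qed.

Lemma nonsrc_uniq C0 b b' : tscs E = [set C0] -> b \notin Vs E -> b' \notin Vs E -> b = b'.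
Proof.
move=> HC Hb Hb'; have := nonsrc_tscs HC Hb; rewrite (nonsrc_tscs HC Hb').
by move/setP/(_ b); rewrite !inE eqxx => /eqP.
Qed.
End Graph.

Section Lin.
Variables (R : realFieldType) (V : finType) (n : nat).
Variables (E : rel V) (y : V -> 'rV[R]_n) (k : V -> V -> R).
Hypothesis Hsimple : forall i, ~~ E i i.

Lemma RkE i j : Rk E k i j =
  (if E j i then k j i else 0) - (i == j)%:R * \sum_(i' | E j i') k j i'.
Proof.
rewrite /Rk; case: ifP => Eji.
  case: eqP => [eij|_]; last by rewrite mul0r subr0.
  by subst i; move: (Hsimple j); rewrite Eji.
by case: eqP => _; rewrite ?mul1r ?mul0r sub0r ?oppr0.
Qed.

Lemma colsum j : \sum_i Rk E k i j = 0.
Proof.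
under eq_bigr do rewrite RkE.
rewrite sumrB -big_mkcond /=.
set S := \sum_(i' | E j i') k j i'.
rewrite [X in _ - X](bigD1 j) //= eqxx mul1r big1 ?addr0 ?subrr // => i /negbTE ->.
by rewrite mul0r.
Qed.

Lemma YRk_colE j : YRk_col E y k j = \sum_(i | E j i) k j i *: (y i - y j).
Proof.
rewrite /YRk_col.
under eq_bigr do rewrite RkE scalerBl.
rewrite sumrB.
under [X in X - _]eq_bigr do rewrite (fun_if (fun c => c *: y _)) scale0r.
rewrite -big_mkcond /=.
set S := \sum_(i' | E j i') k j i'.
rewrite [X in _ - X](bigD1 j) //= eqxx mul1r [X in S *: y j + X]big1 ?addr0; last first.
  by move=> i /negbTE ->; rewrite mul0r scale0r.
under [RHS]eq_bigr do rewrite scalerBr.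
by rewrite sumrB -scaler_suml.
Qed.

Lemma YRk_col_S j : YRk_col E y k j \in Sspace E y.
Proof.
rewrite YRk_colE; apply: memv_suml => i Eji; apply: memvZ.
apply: memv_span; apply/mapP; exists (j, i) => //.
by rewrite mem_enum.
Qed.

Lemma edge_S a b : E a b -> y b - y a \in Sspace E y.
Proof.
move=> Eab; apply: memv_span; apply/mapP; exists (a, b) => //.
by rewrite mem_enum.
Qed.

Lemma diff_S x0 : (forall x, connect E x x0) -> forall a b, y b - y a \in Sspace E y.
Proof.
move=> Hc.
suff H : forall a, y x0 - y a \in Sspace E y.
  move=> a b; have -> : y b - y a = (y x0 - y a) - (y x0 - y b).
    by rewrite opprB [RHS]addrC addrA subrK.
  exact: memvB (H a) (H b).
move=> a; have /connectP [p Hp ->] := Hc a.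
elim: p a Hp => [|c p IH] a /=; first by rewrite subrr mem0v.
case/andP => Eac Hp.
have := memvD (IH c Hp) (edge_S Eac).
by rewrite addrA subrK.
Qed.


Hypothesis Hk : forall i j, E i j -> 0 < k i j.

Lemma Rk_sum (z : V -> R) u : \sum_v Rk E k v u * z v =
  \sum_(v | E u v) k u v * z v - (\sum_(i' | E u i') k u i') * z u.
Proof.
under eq_bigr do rewrite RkE mulrBl.
rewrite sumrB.
under [X in X - _]eq_bigr do rewrite (fun_if (fun c => c * z _)) mul0r.
rewrite -big_mkcond /=.
set S := \sum_(i' | E u i') k u i'.
rewrite [X in _ - X](bigD1 u) //= eqxx mul1r [X in S * z u + X]big1 ?addr0 //.
by move=> i /negbTE ->; rewrite !mul0r.
Qed.

Definition harm (z : V -> R) := forall j, \sum_v Rk E k v j * z v = 0.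

Lemma step z u u1 : harm z -> (forall v, z v <= z u) -> E u u1 -> z u1 = z u.
Proof.
move=> Hz Hmax Euu1.
have H0 : \sum_(v | E u v) k u v * (z u - z v) = 0.
  have := Hz u; rewrite Rk_sum => H.
  under eq_bigr do rewrite mulrBr.
  rewrite sumrB -mulr_suml; apply/eqP; by rewrite -oppr_eq0 opprB H.
have Hge : forall v, E u v -> 0 <= k u v * (z u - z v).
  move=> v Euv; apply: mulr_ge0; first exact: ltW (Hk Euv).
  by rewrite subr_ge0.
have /eqP := psumr_eq0P Hge H0 Euu1.
by rewrite mulf_eq0 (gt_eqF (Hk Euu1)) /= subr_eq0 => /eqP->.
Qed.

Lemma prop z u w : harm z -> (forall v, z v <= z u) -> connect E u w -> z w = z u.
Proof.
move=> Hz Hmax /connectP [p Hp ->].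
elim: p u Hmax Hp => [|c p IH] u Hmax //= /andP [Euc Hp].
have Hc := step Hz Hmax Euc.
rewrite (IH c) // => v; rewrite Hc; exact: Hmax.
Qed.

Lemma harmN z : harm z -> harm (fun v => - z v).
Proof. by move=> Hz j; under eq_bigr do rewrite mulrN; rewrite sumrN Hz oppr0. Qed.

Lemma const z x0 : harm z -> (forall x, connect E x x0) -> forall a, z a = z x0.
Proof.
move=> Hz Hc a.
have [xm _ Hxm] := @arg_maxP _ _ V x0 predT z isT.
have [xn _ Hxn] := @arg_minP _ _ V x0 predT z isT.
have e1 : z x0 = z xm := prop Hz (fun v => Hxm v isT) (Hc xm).
have e2 : - z x0 = - z xn.
  apply: (prop (harmN Hz) _ (Hc xn)) => v /=.
  by rewrite lerN2; exact: Hxn.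
have Hm : z a <= z xm := Hxm a isT.
have Hn : z xn <= z a := Hxn a isT.
move/oppr_inj: e2 => e2.
by apply/le_anti; rewrite {1}e1 Hm /= e2 Hn.
Qed.

Lemma sum_ord (M : nmodType) (G : 'I_#|V| -> M) : \sum_i G i = \sum_v G (enum_rank v).
Proof. by rewrite (reindex enum_rank) //; apply: onW_bij; exact: enum_rank_bij. Qed.

Lemma YRk_col_K j : YRk_col E y k j \in Kspace E y k.
Proof.
case Hj: (j \in Vs E).
  by apply: memv_span; apply/mapP; exists j; rewrite ?mem_enum.
rewrite /YRk_col big1 ?mem0v // => i _.
have Hn : forall i', E j i' = false.
  by move=> i'; apply/negbTE; move: Hj; rewrite /Vs inE => /negbT/existsPn.
by rewrite RkE Hn big_pred0 // mulr0 subr0 scale0r.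
Qed.

Lemma sum_delta (b : V) (f : V -> R) :
  \sum_v (v == b)%:R * f v = f b.
Proof.
rewrite (bigD1 b) //= eqxx mul1r big1 ?addr0 // => v /negbTE ->.
by rewrite mul0r.
Qed.

Lemma sum_deltaV (b : V) (f : V -> 'rV[R]_n) :
  \sum_v (v == b)%:R *: f v = f b.
Proof.
rewrite (bigD1 b) //= eqxx scale1r big1 ?addr0 // => v /negbTE ->.
by rewrite scale0r.
Qed.

Lemma S_sub_K x0 : (forall x, connect E x x0) ->
  forall a b, y b - y a \in Kspace E y k.
Proof.
move=> Hc a b.
pose A : 'M[R]_(#|V|, #|V|) := \matrix_(j, i) Rk E k (enum_val i) (enum_val j).
pose u : 'rV[R]_#|V| := \row_i ((enum_val i == b)%:R - (enum_val i == a)%:R).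
have Hu : (u <= A)%MS.
  rewrite submxE; apply/eqP/rowP => c; rewrite !mxE.
  pose zc v := cokermx A (enum_rank v) c.
  have Hh : harm zc.
    move=> j; have := mulmx_coker A; move/matrixP/(_ (enum_rank j) c).
    rewrite !mxE sum_ord => H; apply: etrans H; apply: eq_bigr => v _.
    by rewrite /A mxE !enum_rankK.
  rewrite sum_ord.
  under eq_bigr do rewrite [u _ _]mxE enum_rankK mulrBl.
  rewrite sumrB !sum_delta.
  by rewrite -/(zc b) -/(zc a) (const Hh Hc b) (const Hh Hc a) subrr.
have [x Hx] := submxP Hu.
have -> : y b - y a = \sum_j x ord0 j *: YRk_col E y k (enum_val j).
  transitivity (\sum_v u ord0 (enum_rank v) *: y v).
    under [RHS]eq_bigr do rewrite mxE enum_rankK scalerBl.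
    by rewrite sumrB !sum_deltaV.
  rewrite Hx; under eq_bigr do rewrite mxE scaler_suml.
  rewrite exchange_big /=; apply: eq_bigr => j _.
  rewrite /YRk_col scaler_sumr; apply: eq_bigr => v _.
  by rewrite /A mxE enum_rankK scalerA.
by apply: memv_suml => j _; apply: memvZ; exact: YRk_col_K.
Qed.

Lemma L_mem i j : i \in Vs E -> j \in Vs E -> y i - y j \in Lspace E y.
Proof.
move=> Hi Hj; apply: memv_span; apply/mapP; exists (i, j) => //.
by rewrite mem_enum; apply/andP.
Qed.

Lemma S_sub_L C0 : tscs E = [set C0] ->
  (exists c : V -> R, (forall j, j \in Vs E -> 0 < c j) /\
      \sum_(j in Vs E) c j *: YRk_col E y k j = 0) ->
  forall a b, E a b -> y b - y a \in Lspace E y.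
Proof.
move=> HC [c [Hpos Hsum]] a b Eab.
have Ha : a \in Vs E by rewrite inVs; apply/existsP; exists b.
case Hb: (b \in Vs E); first exact: L_mem.
move/negbT: Hb => Hb.
pose w i := \sum_(j in Vs E) c j * Rk E k i j.
have Hw : \sum_i w i *: y i = 0.
  rewrite -[RHS]Hsum; under eq_bigr do rewrite scaler_suml.
  rewrite /w exchange_big /=; apply: eq_bigr => j _.
  by rewrite /YRk_col scaler_sumr; apply: eq_bigr => i _; rewrite scalerA.
have Hw0 : \sum_i w i = 0.
  rewrite exchange_big /= big1 // => j _.
  by rewrite -mulr_sumr colsum mulr0.
have Hw' : \sum_i w i *: (y i - y a) = 0.
  under eq_bigr do rewrite scalerBr.
  by rewrite sumrB -scaler_suml Hw Hw0 scale0r subrr.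
rewrite (bigD1 b) //= in Hw'.
have Hrest : \sum_(i | i != b) w i *: (y i - y a) \in Lspace E y.
  apply: memv_suml => i Hib; apply: memvZ; apply: L_mem => //.
  case Hii: (i \in Vs E) => //; move/negbT: Hii => Hi2; move: Hib; by rewrite (nonsrc_uniq HC Hi2 Hb) eqxx.
have Hwb : 0 < w b.
  rewrite /w (bigD1 a) //=.
  have Hra : Rk E k b a = k a b by rewrite /Rk Eab.
  apply: lt_le_trans (_ : 0 < c a * Rk E k b a) _.
    by rewrite Hra mulr_gt0 ?Hpos ?Hk.
  rewrite lerDl; apply: sumr_ge0 => j /andP [Hj _].
  apply: mulr_ge0; first exact: ltW (Hpos j Hj).
  rewrite /Rk; case: ifP => [Ejb|_]; first exact: ltW (Hk Ejb).
  case: eqP => [ebj|_] //; by move: Hb; rewrite ebj Hj.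
have : w b *: (y b - y a) \in Lspace E y.
  have -> : w b *: (y b - y a) = - \sum_(i | i != b) w i *: (y i - y a).
    by apply/eqP; rewrite -addr_eq0 Hw'.
  by rewrite memvN.
move/(memvZ (w b)^-1); rewrite scalerA mulVf ?scale1r //.
by rewrite gt_eqF.
Qed.
End Lin.
Unset Implicit Arguments.
Theorem lemma13 (R : realFieldType) (V : finType) (n : nat)
  (E : rel V) (y : V -> 'rV[R]_n) (k : V -> V -> R)
  (Hsimple : forall i, ~~ E i i)
  (Hk : forall i j, E i j -> 0 < k i j)
  (Ht : tnum E = 1%N)
  (Hker : exists c : V -> R,
      (forall j, j \in Vs E -> 0 < c j) /\
      \sum_(j in Vs E) c j *: YRk_col E y k j = 0) :
  (Kspace E y k = Lspace E y /\ Lspace E y = Sspace E y) /\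
  dependency E y = deficiency E y + (tnum' E)%:Z - 1.
Proof.
have [x0 [Hc [HC Hterm]]] := root_exists Ht.
have KS : (Kspace E y k <= Sspace E y)%VS.
  apply/span_subvP => v /mapP [j _ ->]; exact: YRk_col_S.
have LS : (Lspace E y <= Sspace E y)%VS.
  apply/span_subvP => v /mapP [p _ ->]; have := diff_S y Hc p.2 p.1. done.
have SK : (Sspace E y <= Kspace E y k)%VS.
  apply/span_subvP => v /mapP [p _ ->]; by have := S_sub_K y Hsimple Hk Hc p.1 p.2.
have SL : (Sspace E y <= Lspace E y)%VS.
  apply/span_subvP => v /mapP [p]; rewrite mem_enum => Hp ->.
  by have := S_sub_L Hsimple Hk HC Hker Hp.
have eKS : Kspace E y k = Sspace E y by apply: subv_anti; rewrite KS SK.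
have eLS : Lspace E y = Sspace E y by apply: subv_anti; rewrite LS SL.
split; first by rewrite eKS eLS.
have Hsym : connect_sym (symE E).
  by apply: sym_connect_sym => a b; rewrite /symE orbC.
have Hnl : nlink E = 1%N.
  rewrite /nlink -(n_comp_connect Hsym x0).
  apply: eq_n_comp_r => x; rewrite !inE /= Hsym.
  apply/esym; apply: (@connect_sub _ E (symE E) _ x x0 (Hc x)) => a b Eab.
  by apply: connect1; rewrite /symE Eab.
have Ht' : tnum' E = (1 < #|scc E x0|)%N.
  rewrite /tnum' HC; case H: (1 < #|scc E x0|)%N => /=.
    transitivity #|[set scc E x0]|; last exact: cards1. apply: eq_card => C.
    by rewrite !inE; case: eqP => // ->; rewrite H.
  apply/eqP; rewrite cards_eq0; apply/eqP/setP => C.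
  by rewrite !inE; case: eqP => // ->; rewrite H.
have Hcard : (#|Vs E| + 1 = #|V| + tnum' E)%N.
  rewrite Ht'; case: (boolP [forall v, v \in Vs E]) => Hall.
    have -> : Vs E = [set: V] by apply/setP => v; rewrite in_setT (forallP Hall v).
    rewrite cardsT.
    have : x0 \in Vs E := forallP Hall x0.
    rewrite inVs => /existsP [z Ez].
    have Hz : z \in scc E x0.
      move/forallP/(_ x0): Hterm; rewrite scc_self /= => /forallP/(_ z).
      by rewrite Ez.
    have -> : (1 < #|scc E x0|)%N.
      apply/card_gt1P; exists x0, z; split => //; first exact: scc_self.
      by apply/eqP => ex; move: (Hsimple x0); rewrite {2}ex Ez.
    done.
  move: Hall; rewrite negb_forall => /existsP [b Hb].
  rewrite (nonsrc_tscs HC Hb) cards1.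
  have -> : Vs E = [set~ b].
    apply/setP => v; rewrite in_setC1; case Hv: (v \in Vs E).
      by apply/esym/eqP => ev; move: Hb; rewrite -ev Hv.
    by move/negbT: Hv => Hv; rewrite (nonsrc_uniq HC Hv Hb) eqxx.
  rewrite cardsC1.
  have : (0 < #|V|)%N by apply/card_gt0P; exists b.
  lia.
rewrite /dependency /deficiency eLS Hnl.
lia.
Qed.
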